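(* Let $\mathbb K=[-1,1]$ and let $H:[-1,1]\times\mathbb R\to\mathbb R$ with $H(x,0)=0$ for all $x$ satisfy (H1) and (H4). Then $v_-:=\lim_{p\to-\infty}\partial_pH(-1,p)$ and $v_+:=\lim_{p\to\infty}\partial_pH(1,p)$ exist with $v_-\ge0$, $v_+\le0$, one has $\lim_{p\to-\infty}H(-1,p)/p=v_-$ and $\lim_{p\to\infty}H(1,p)/p=v_+$, and $\partial_pH(-1,p)>0$, $\partial_pH(1,p)<0$ for all $p\in\mathbb R$. If moreover $H$ satisfies (H3), then for every $c\in\mathbb R$, every $(a,q)\in(-1,1)\times(0,\infty)$ and every $(b,r)\in(-1,1)\times(-\infty,0)$ the set $\big((Q^+_{a,q})^\circ\cup(Q^-_{b,r})^\circ\big)^c\cap H^{-1}((-\infty,c])$ is compact.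
   Context: Conditions, for $\mathbb K=[-1,1]$: (H1) $H$ is $C^2$ with $\partial_p^2H>0$ on $[-1,1]\times\mathbb R$ and is the restriction of a $C^2$ function on $(-1-\epsilon,1+\epsilon)\times\mathbb R$ for some $\epsilon>0$. (H3) for each compact $K\subseteq(-1,1)$, $\lim_{|p|\to\infty}\inf_{x\in K}H(x,p)/|p|=\infty$, and $\lim_{p\to\infty}H(-1,p)/p=\infty$, $\lim_{p\to-\infty}H(1,p)/(-p)=\infty$. (H4) $\lim_{x\to-1}\operatorname{argmin}_pH(x,p)=-\infty$ and $\lim_{x\to1}\operatorname{argmin}_pH(x,p)=+\infty$. Quadrants: $Q^+_{y,q}=\{(x,p)\in[-1,1]\times\mathbb R:x\ge y,p\ge q\}$, $Q^-_{y,q}=\{(x,p)\in[-1,1]\times\mathbb R:x\le y,p\le q\}$, interiors taken in $[-1,1]\times\mathbb R$; complements taken in $[-1,1]\times\mathbb R$. *)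

(* Defs.v *)
From Stdlib Require Import Reals Lra List.
Open Scope R_scope.

Definition ball2 (x p d x' p' : R) : Prop := (x' - x)^2 + (p' - p)^2 < d^2.

Definition open2 (U : R -> R -> Prop) : Prop :=
  forall x p, U x p -> exists d, d > 0 /\ forall x' p', ball2 x p d x' p' -> U x' p'.

Definition compact2 (K : R -> R -> Prop) : Prop :=
  forall (I : Type) (U : I -> R -> R -> Prop),
    (forall i, open2 (U i)) ->
    (forall x p, K x p -> exists i, U i x p) ->
    exists l : list I, forall x p, K x p -> exists i, In i l /\ U i x p.

Definition cont2_on (U : R -> R -> Prop) (G : R -> R -> R) : Prop :=
  forall x p, U x p -> forall e, e > 0 -> exists d, d > 0 /\
    forall x' p', ball2 x p d x' p' -> Rabs (G x' p' - G x p) < e.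

Definition C2_on (U : R -> R -> Prop) (G : R -> R -> R) : Prop :=
  exists G1 G2 G11 G12 G21 G22 : R -> R -> R,
    (forall x p, U x p ->
       derivable_pt_lim (fun y => G y p) x (G1 x p) /\
       derivable_pt_lim (fun q => G x q) p (G2 x p) /\
       derivable_pt_lim (fun y => G1 y p) x (G11 x p) /\
       derivable_pt_lim (fun q => G1 x q) p (G12 x p) /\
       derivable_pt_lim (fun y => G2 y p) x (G21 x p) /\
       derivable_pt_lim (fun q => G2 x q) p (G22 x p)) /\
    cont2_on U G /\ cont2_on U G1 /\ cont2_on U G2 /\
    cont2_on U G11 /\ cont2_on U G12 /\ cont2_on U G21 /\ cont2_on U G22.

Definition strip (x p : R) : Prop := -1 <= x <= 1.

(* (H1), regularity part: H restricted to [-1,1] x R is the restriction of a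
   C^2 function on (-1-eps,1+eps) x R.  (The convexity part d_p^2 H > 0 is
   stated in the theorem.) *)
Definition H1_ext (H : R -> R -> R) : Prop :=
  exists eps, eps > 0 /\ exists G : R -> R -> R,
    C2_on (fun x _ => -1 - eps < x < 1 + eps) G /\
    (forall x p, -1 <= x <= 1 -> G x p = H x p).

Definition H3 (H : R -> R -> R) : Prop :=
  (forall K : R -> Prop, compact K -> (forall x, K x -> -1 < x < 1) ->
     forall M, exists P, forall x p, K x -> Rabs p > P -> H x p / Rabs p >= M) /\
  (forall M, exists P, forall p, p > P -> H (-1) p / p >= M) /\
  (forall M, exists P, forall p, p < P -> H 1 p / (- p) >= M).

(* (H4): argmin_p H(x,p) exists for x near -1 (x > -1) and tends to -infinity,
   and exists for x near 1 (x < 1) and tends to +infinity.  (By strict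
   convexity in p the minimiser is unique when it exists.) *)
Definition H4 (H : R -> R -> R) : Prop :=
  (forall M, exists d, d > 0 /\ forall x, -1 < x < -1 + d ->
     exists m, m < M /\ forall q, H x m <= H x q) /\
  (forall M, exists d, d > 0 /\ forall x, 1 - d < x < 1 ->
     exists m, m > M /\ forall q, H x m <= H x q).

Definition lim_minf (f : R -> R) (l : R) : Prop :=
  forall e, e > 0 -> exists P, forall p, p < P -> Rabs (f p - l) < e.
Definition lim_pinf (f : R -> R) (l : R) : Prop :=
  forall e, e > 0 -> exists P, forall p, p > P -> Rabs (f p - l) < e.

Definition Qplus (y q x p : R) : Prop := strip x p /\ x >= y /\ p >= q.
Definition Qminus (y q x p : R) : Prop := strip x p /\ x <= y /\ p <= q.

Definition rel_interior (S A : R -> R -> Prop) (x p : R) : Prop :=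
  A x p /\ exists d, d > 0 /\ forall x' p', S x' p' -> ball2 x p d x' p' -> A x' p'.

(* Main.v *)
Require Import Defs.
From Stdlib Require Import Reals Lra Lia Psatz List Classical FunctionalExtensionality.
Open Scope R_scope.

Module MC.
From mathcomp Require Import all_boot all_order all_algebra.
From mathcomp Require Import all_classical all_reals all_analysis.
From mathcomp Require Import Rstruct Rstruct_topology.
Import Order.TTheory GRing.Theory Num.Theory.
From HB Require Import structures.
Local Open Scope classical_set_scope.
Definition RR := (R * R)%type.
HB.instance Definition _ := Topological.on RR.
HB.instance Definition _ := Pointed.on RR.


Lemma open2_open (U : R -> R -> Prop) : open2 U -> open (fun z : R * R => U z.1 z.2).
Proof.
move=> Uop; rewrite openE => z Uz.
have [d [d0 Hd]] := Uop _ _ Uz.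
apply/nbhs_ballP; exists (Rdiv d 2).
  apply/RltP; change (Rlt 0 (Rdiv d 2)); lra.
case=> w1 w2 [/= h1 h2]; apply: Hd.
move/RltP: h1 => h1; move/RltP: h2 => h2.
rewrite /ball2.
change (Rlt (Rabs (Rminus z.1 w1)) (Rdiv d 2)) in h1.
change (Rlt (Rabs (Rminus z.2 w2)) (Rdiv d 2)) in h2.
rewrite -(pow2_abs (w1 - z.1)) -(pow2_abs (w2 - z.2)) Rabs_minus_sym (Rabs_minus_sym w2).
have := Rabs_pos (z.1 - w1); have := Rabs_pos (z.2 - w2).
nra.
Qed.

Lemma pick_list (I : Type) (U : I -> R -> R -> Prop) (s : seq (set (R * R))) :
  (forall V, V \in s -> exists i, V = (fun z : R * R => U i z.1 z.2)) ->
  exists l : list I, forall V, V \in s -> exists i, In i l /\ V = (fun z : R * R => U i z.1 z.2).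
Proof.
elim: s => [|V s IH] H.
  by exists nil => V; rewrite in_nil.
have [l Hl] : exists l : list I, forall V, V \in s -> exists i, In i l /\ V = (fun z : R * R => U i z.1 z.2).
  by apply: IH => W Ws; apply: H; rewrite in_cons Ws orbT.
have [i Hi] := H V (mem_head _ _).
exists (i :: l) => W; rewrite in_cons => /orP [/eqP -> | Ws].
  by exists i; split => //; left.
by have [j [jl Hj]] := Hl W Ws; exists j; split => //; right.
Qed.

Lemma rect_compact2 (a b c d : R) :
  compact2 (fun x p => Rle a x /\ Rle x b /\ (Rle c p /\ Rle p d)).
Proof.
move=> I U Uop Ucov.
have Kc : cover_compact (T:=RR) (`[a,b] `*` `[c,d]).
  have K0 := compact_setX (@segment_compact R a b) (@segment_compact R c d).
  have K1 : compact (T:=RR) (`[a,b] `*` `[c,d]) := K0.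
  by rewrite compact_cover in K1.
pose D := [set V : set (R*R) | exists i, V = (fun z : R*R => U i z.1 z.2)].
have opD : forall V, D V -> open V by move=> V [i ->]; exact: open2_open.
have cov : `[a,b] `*` `[c,d] `<=` \bigcup_(V in D) V.
  case=> x p [/= hx hp].
  move: hx hp; rewrite /= !in_itv /= => /andP [/RleP h1 /RleP h2] /andP [/RleP h3 /RleP h4].
  have [i Ui] := Ucov x p (conj h1 (conj h2 (conj h3 h4))).
  exists (fun z : R*R => U i z.1 z.2) => //; by exists i.
have [F FD Fcov] := Kc _ D id opD cov.
have [l Hl] := @pick_list I U (finmap.enum_fset F) (fun V VF => set_mem (FD V VF)).
exists l => x p [h1 [h2 [h3 h4]]].
have : (`[a,b] `*` `[c,d]) (x, p).
  by split; rewrite /= in_itv /=; apply/andP; split; apply/RleP.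
move/Fcov => [V VF Vxp].
have [i [il Vi]] := Hl V VF.
exists i; split => //; by rewrite Vi in Vxp.
Qed.
End MC.

Lemma mvt (f f' : R -> R) a b :
  (forall t, derivable_pt_lim f t (f' t)) -> a < b ->
  exists c, a < c < b /\ f b - f a = f' c * (b - a).
Proof.
  intros Hd Hab. destruct (MVT_cor2 f f' a b Hab (fun c _ => Hd c)) as [c [E Hc]].
  exists c; split; assumption.
Qed.

Lemma strict_incr (f f' : R -> R) :
  (forall t, derivable_pt_lim f t (f' t)) -> (forall t, f' t > 0) ->
  forall a b, a < b -> f a < f b.
Proof.
  intros Hd Hp a b Hab. destruct (mvt f f' a b Hd Hab) as [c [Hc E]].
  specialize (Hp c). nra.
Qed.

Lemma convex_scale (f f' f'' : R -> R) :
  (forall t, derivable_pt_lim f t (f' t)) ->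
  (forall t, derivable_pt_lim f' t (f'' t)) ->
  (forall t, f'' t > 0) -> f 0 = 0 ->
  forall s t, 1 <= t -> t * f s <= f (t * s).
Proof.
  intros Hd Hd2 Hpp f0 s t Ht.
  destruct (Req_dec t 1) as [->|Ht1].
  { rewrite !Rmult_1_l; lra. }
  assert (Ht' : 1 < t) by lra.
  destruct (Rtotal_order s 0) as [Hs|[Hs|Hs]].
  - destruct (mvt f f' s 0 Hd Hs) as [c1 [Hc1 E1]].
    assert (Hts : t * s < s) by nra.
    destruct (mvt f f' (t*s) s Hd Hts) as [c2 [Hc2 E2]].
    assert (Hlt : f' c2 < f' c1) by (apply (strict_incr f' f'' Hd2 Hpp); lra).
    nra.
  - subst s. rewrite Rmult_0_r, f0. lra.
  - destruct (mvt f f' 0 s Hd Hs) as [c1 [Hc1 E1]].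
    assert (Hts : s < t * s) by nra.
    destruct (mvt f f' s (t*s) Hd Hts) as [c2 [Hc2 E2]].
    assert (Hlt : f' c1 < f' c2) by (apply (strict_incr f' f'' Hd2 Hpp); lra).
    nra.
Qed.

Lemma div_bound w p e : p <> 0 -> Rabs w < e * Rabs p -> Rabs (w / p) < e.
Proof.
  intros Hp H. unfold Rdiv. rewrite Rabs_mult, Rabs_inv.
  assert (Hap : Rabs p > 0) by (apply Rabs_pos_lt; auto).
  apply (Rmult_lt_reg_r (Rabs p)); auto.
  rewrite Rmult_assoc, Rinv_l by lra. lra.
Qed.

Lemma ball2_tri x p d x' p' x'' p'' :
  ball2 x p (d/2) x' p' -> ball2 x' p' (d/2) x'' p'' -> ball2 x p d x'' p''.
Proof.
  unfold ball2. intros H1 H2.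
  assert (E: (x'' - x)^2 + (p'' - p)^2 <= 2*((x'-x)^2 + (p'-p)^2) + 2*((x''-x')^2+(p''-p')^2)).
  { pose proof (pow2_ge_0 ((x'-x)-(x''-x'))). pose proof (pow2_ge_0 ((p'-p)-(p''-p'))). nra. }
  assert (E2 : (d/2)^2 = d^2/4) by field. lra.
Qed.

Theorem part1 (H Hp Hpp : R -> R -> R)
  (H0 : forall x, -1 <= x <= 1 -> H x 0 = 0)
  (HH1 : H1_ext H)
  (hHp : forall x p, -1 <= x <= 1 -> derivable_pt_lim (fun q => H x q) p (Hp x p))
  (hHpp : forall x p, -1 <= x <= 1 -> derivable_pt_lim (fun q => Hp x q) p (Hpp x p))
  (hconv : forall x p, -1 <= x <= 1 -> Hpp x p > 0)
  (HH4 : H4 H) :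
  (exists vm vp : R,
      0 <= vm /\ vp <= 0 /\
      lim_minf (fun p => Hp (-1) p) vm /\
      lim_pinf (fun p => Hp 1 p) vp /\
      lim_minf (fun p => H (-1) p / p) vm /\
      lim_pinf (fun p => H 1 p / p) vp /\
      (forall p, Hp (-1) p > 0) /\ (forall p, Hp 1 p < 0)).
Proof.
  destruct HH1 as [eps [Heps [G [HC2 HGH]]]].
  destruct HC2 as [G1 [G2 [G11 [G12 [G21 [G22 [Hder [cG [cG1 [cG2 _]]]]]]]]]].
  assert (HpG : forall x p, -1 <= x <= 1 -> Hp x p = G2 x p).
  { intros x p Hx. assert (Hu : -1 - eps < x < 1 + eps) by lra.
    destruct (Hder x p Hu) as [_ [Hd2 _]].
    apply (uniqueness_limite (fun q => H x q) p); [apply hHp; auto|].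
    replace (fun q => H x q) with (fun q => G x q); auto.
    apply functional_extensionality; intros q; apply HGH; auto. }
  assert (cHp : forall x p, -1 <= x <= 1 -> forall e, e > 0 -> exists d, d > 0 /\
     forall x' p', -1 <= x' <= 1 -> ball2 x p d x' p' -> Rabs (Hp x' p' - Hp x p) < e).
  { intros x p Hx e He. assert (Hu : -1 - eps < x < 1 + eps) by lra.
    destruct (cG2 x p Hu e He) as [d [Hd Hc]]. exists d; split; auto.
    intros x' p' Hx' Hb. rewrite !HpG by auto. apply Hc; auto. }
  assert (Hpinc : forall x, -1 <= x <= 1 -> forall a b, a < b -> Hp x a < Hp x b).
  { intros x Hx. apply (strict_incr (Hp x) (Hpp x)).
    - intros t; apply (hHpp x t Hx).
    - intros t; apply (hconv x t Hx). }
  assert (Hpm : forall p, Hp (-1) p >= 0).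
  { intros p. destruct (Rlt_or_le (Hp (-1) p) 0) as [Hneg|]; [|lra]. exfalso.
    destruct (cHp (-1) p ltac:(lra) (- Hp (-1) p) ltac:(lra)) as [d1 [Hd1 Hc]].
    destruct (proj1 HH4 p) as [d2 [Hd2 Hmin]].
    set (m0 := Rmin (Rmin d1 d2) 1).
    assert (Hm1 : m0 <= d1) by (unfold m0; pose proof (Rmin_l (Rmin d1 d2) 1); pose proof (Rmin_l d1 d2); lra).
    assert (Hm2 : m0 <= d2) by (unfold m0; pose proof (Rmin_l (Rmin d1 d2) 1); pose proof (Rmin_r d1 d2); lra).
    assert (Hm3 : m0 <= 1) by (unfold m0; apply Rmin_r).
    assert (Hm0 : m0 > 0) by (unfold m0; repeat apply Rmin_glb_lt; lra).
    set (x := -1 + m0 / 2).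
    assert (Hx : -1 <= x <= 1) by (unfold x; lra).
    assert (Hb : ball2 (-1) p d1 x p) by (unfold ball2, x; nra).
    destruct (Hmin x ltac:(unfold x; lra)) as [m [Hm Hmm]].
    pose proof (Hc x p Hx Hb) as Hc'. apply Rabs_def2 in Hc'.
    destruct (mvt (H x) (Hp x) m p (fun t => hHp x t Hx) Hm) as [c [Hcc E]].
    pose proof (Hpinc x Hx c p (proj2 Hcc)). specialize (Hmm p). nra. }
  assert (Hpp1 : forall p, Hp 1 p <= 0).
  { intros p. destruct (Rlt_or_le 0 (Hp 1 p)) as [Hneg|]; [|lra]. exfalso.
    destruct (cHp 1 p ltac:(lra) (Hp 1 p) ltac:(lra)) as [d1 [Hd1 Hc]].
    destruct (proj2 HH4 p) as [d2 [Hd2 Hmin]].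
    set (m0 := Rmin (Rmin d1 d2) 1).
    assert (Hm1 : m0 <= d1) by (unfold m0; pose proof (Rmin_l (Rmin d1 d2) 1); pose proof (Rmin_l d1 d2); lra).
    assert (Hm2 : m0 <= d2) by (unfold m0; pose proof (Rmin_l (Rmin d1 d2) 1); pose proof (Rmin_r d1 d2); lra).
    assert (Hm3 : m0 <= 1) by (unfold m0; apply Rmin_r).
    assert (Hm0 : m0 > 0) by (unfold m0; repeat apply Rmin_glb_lt; lra).
    set (x := 1 - m0 / 2).
    assert (Hx : -1 <= x <= 1) by (unfold x; lra).
    assert (Hb : ball2 1 p d1 x p) by (unfold ball2, x; nra).
    destruct (Hmin x ltac:(unfold x; lra)) as [m [Hm Hmm]].
    pose proof (Hc x p Hx Hb) as Hc'. apply Rabs_def2 in Hc'.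
    destruct (mvt (H x) (Hp x) p m (fun t => hHp x t Hx) Hm) as [c [Hcc E]].
    pose proof (Hpinc x Hx p c (proj1 Hcc)). specialize (Hmm p). nra. }
  assert (Hpos : forall p, Hp (-1) p > 0).
  { intros p. pose proof (Hpinc (-1) ltac:(lra) (p-1) p ltac:(lra)). pose proof (Hpm (p-1)). lra. }
  assert (Hneg1 : forall p, Hp 1 p < 0).
  { intros p. pose proof (Hpinc 1 ltac:(lra) p (p+1) ltac:(lra)). pose proof (Hpp1 (p+1)). lra. }
  destruct (completeness (fun y => exists p, y = - Hp (-1) p)) as [L [HLub HLleast]].
  { exists 0. intros y [p ->]. specialize (Hpos p). lra. }
  { exists (- Hp (-1) 0). exists 0. reflexivity. }
  destruct (completeness (fun y => exists p, y = Hp 1 p)) as [L' [HLub' HLleast']].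
  { exists 0. intros y [p ->]. specialize (Hneg1 p). lra. }
  { exists (Hp 1 0). exists 0. reflexivity. }
  assert (HL0 : L <= 0).
  { apply HLleast. intros y [p ->]. specialize (Hpos p). lra. }
  assert (HL0' : L' <= 0).
  { apply HLleast'. intros y [p ->]. specialize (Hneg1 p). lra. }
  assert (Lim1 : lim_minf (fun p => Hp (-1) p) (-L)).
  { intros e He.
    destruct (classic (exists p0, - Hp (-1) p0 > L - e)) as [[p0 Hp0]|Hn].
    - exists p0. intros p Hlt.
      pose proof (Hpinc (-1) ltac:(lra) p p0 Hlt).
      pose proof (HLub (- Hp (-1) p) (ex_intro _ p eq_refl)).
      apply Rabs_def1; lra.
    - exfalso. assert (L <= L - e); [|lra]. apply HLleast.
      intros y [p ->]. apply Rnot_lt_le. intro Hc. apply Hn. exists p. lra. }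
  assert (Lim2 : lim_pinf (fun p => Hp 1 p) L').
  { intros e He.
    destruct (classic (exists p0, Hp 1 p0 > L' - e)) as [[p0 Hp0]|Hn].
    - exists p0. intros p Hlt.
      pose proof (Hpinc 1 ltac:(lra) p0 p Hlt).
      pose proof (HLub' (Hp 1 p) (ex_intro _ p eq_refl)).
      apply Rabs_def1; lra.
    - exfalso. assert (L' <= L' - e); [|lra]. apply HLleast'.
      intros y [p ->]. apply Rnot_lt_le. intro Hc. apply Hn. exists p. lra. }
  exists (-L), L'.
  split; [lra|]. split; [lra|]. split; [exact Lim1|]. split; [exact Lim2|].
  split; [| split; [| split]]; auto.
  - intros e He. destruct (Lim1 (e/2) ltac:(lra)) as [P0 HP0].
    set (P1 := Rmin P0 (-1)).
    assert (HP1 : P1 <= P0 /\ P1 <= -1) by (unfold P1; split; [apply Rmin_l|apply Rmin_r]).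
    set (A := H (-1) P1 - (-L) * P1).
    assert (EA : e * (2 * Rabs A / e) = 2 * Rabs A) by (field; lra).
    exists (Rmin P1 (- (2 * Rabs A / e) - 1)). intros p Hp'.
    assert (Hq : p < P1 /\ p < - (2 * Rabs A / e) - 1).
    { pose proof (Rmin_l P1 (- (2 * Rabs A / e) - 1)). pose proof (Rmin_r P1 (- (2 * Rabs A / e) - 1)). lra. }
    destruct (mvt (H (-1)) (Hp (-1)) p P1 (fun t => hHp (-1) t ltac:(lra)) (proj1 Hq)) as [c [Hc E]].
    pose proof (HP0 c ltac:(lra)) as Hc2.
    assert (Num : A + (Hp (-1) c - - L) * (p - P1) = H (-1) p - (- L) * p) by (unfold A; nra).
    replace (H (-1) p / p - - L) with ((H (-1) p - (- L) * p) / p) by (field; lra).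
    rewrite <- Num.
    apply div_bound; [lra|].
    rewrite (Rabs_left p) by lra.
    pose proof (Rabs_triang A ((Hp (-1) c - - L) * (p - P1))).
    rewrite Rabs_mult in H1. rewrite (Rabs_left (p - P1)) in H1 by lra.
    pose proof (Rabs_pos (Hp (-1) c - - L)). pose proof (Rabs_pos A).
    nra.
  - intros e He. destruct (Lim2 (e/2) ltac:(lra)) as [P0 HP0].
    set (P1 := Rmax P0 1).
    assert (HP1 : P0 <= P1 /\ 1 <= P1) by (unfold P1; split; [apply Rmax_l|apply Rmax_r]).
    set (A := H 1 P1 - L' * P1).
    assert (EA : e * (2 * Rabs A / e) = 2 * Rabs A) by (field; lra).
    exists (Rmax P1 (2 * Rabs A / e + 1)). intros p Hp'.
    assert (Hq : P1 < p /\ 2 * Rabs A / e + 1 < p).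
    { pose proof (Rmax_l P1 (2 * Rabs A / e + 1)). pose proof (Rmax_r P1 (2 * Rabs A / e + 1)). lra. }
    destruct (mvt (H 1) (Hp 1) P1 p (fun t => hHp 1 t ltac:(lra)) (proj1 Hq)) as [c [Hc E]].
    pose proof (HP0 c ltac:(lra)) as Hc2.
    assert (Num : A + (Hp 1 c - L') * (p - P1) = H 1 p - L' * p) by (unfold A; nra).
    replace (H 1 p / p - L') with ((H 1 p - L' * p) / p) by (field; lra).
    rewrite <- Num.
    apply div_bound; [lra|].
    rewrite (Rabs_right p) by lra.
    pose proof (Rabs_triang A ((Hp 1 c - L') * (p - P1))).
    rewrite Rabs_mult in H1. rewrite (Rabs_right (p - P1)) in H1 by lra.
    pose proof (Rabs_pos (Hp 1 c - L')). pose proof (Rabs_pos A).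
    nra.
Qed.

Lemma closed_sub_compact2 (K C : R -> R -> Prop) : compact2 C ->
  (forall x p, K x p -> C x p) -> open2 (fun x p => ~ K x p) -> compact2 K.
Proof.
  intros HC HKC Hop I U Uop Ucov.
  destruct (HC (option I) (fun o => match o with Some i => U i | None => fun x p => ~ K x p end)) as [l Hl].
  - intros [i|]; auto.
  - intros x p Cx. destruct (classic (K x p)) as [Kx|nK].
    + destruct (Ucov x p Kx) as [i Hi]. exists (Some i); auto.
    + exists None; auto.
  - exists (flat_map (fun o => match o with Some i => i :: nil | None => nil end) l).
    intros x p Kx. destruct (Hl x p (HKC x p Kx)) as [[i|] [Hin HU]].
    + exists i; split; auto. apply in_flat_map. exists (Some i); split; auto; simpl; auto.
    + contradiction.
Qed.

Lemma ball_coord x p d x' p' : ball2 x p d x' p' -> 0 < d ->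
  (- d < x' - x < d) /\ (- d < p' - p < d).
Proof.
  unfold ball2. intros Hb Hd. pose proof (pow2_ge_0 (x' - x)). pose proof (pow2_ge_0 (p' - p)).
  repeat split.
  - destruct (Rlt_or_le (-d) (x' - x)); auto. exfalso. nra.
  - destruct (Rlt_or_le (x' - x) d); auto. exfalso. nra.
  - destruct (Rlt_or_le (-d) (p' - p)); auto. exfalso. nra.
  - destruct (Rlt_or_le (p' - p) d); auto. exfalso. nra.
Qed.

Theorem part2 (H Hp Hpp : R -> R -> R)
  (H0 : forall x, -1 <= x <= 1 -> H x 0 = 0)
  (HH1 : H1_ext H)
  (hHp : forall x p, -1 <= x <= 1 -> derivable_pt_lim (fun q => H x q) p (Hp x p))
  (hHpp : forall x p, -1 <= x <= 1 -> derivable_pt_lim (fun q => Hp x q) p (Hpp x p))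
  (hconv : forall x p, -1 <= x <= 1 -> Hpp x p > 0)
  (HH4 : H4 H) :
  (H3 H ->
   forall c a q b r : R, -1 < a < 1 -> 0 < q -> -1 < b < 1 -> r < 0 ->
   compact2 (fun x p =>
     strip x p /\
     ~ (rel_interior strip (Qplus a q) x p \/ rel_interior strip (Qminus b r) x p) /\
     H x p <= c)).
Proof.
  intros HH3 c a q b r Ha Hq Hb Hr.
  destruct (part1 H Hp Hpp H0 HH1 hHp hHpp hconv HH4) as [vm [vp [_ [_ [_ [_ [_ [_ [Hpos Hneg]]]]]]]]].
  destruct HH1 as [eps [Heps [G [HC2 HGH]]]].
  destruct HC2 as [G1 [G2 [G11 [G12 [G21 [G22 [Hder [cG [cG1 [cG2 _]]]]]]]]]].
  assert (cH : forall x p, -1 <= x <= 1 -> forall e, e > 0 -> exists d, d > 0 /\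
     forall x' p', -1 <= x' <= 1 -> ball2 x p d x' p' -> Rabs (H x' p' - H x p) < e).
  { intros x p Hx e He. assert (Hu : -1 - eps < x < 1 + eps) by lra.
    destruct (cG x p Hu e He) as [d [Hd Hc]]. exists d; split; auto.
    intros x' p' Hx' Hbl. rewrite <- !HGH by auto. apply Hc; auto. }
  assert (Hcs : forall x, -1 <= x <= 1 -> forall s t, 1 <= t -> t * H x s <= H x (t * s)).
  { intros x Hx. apply (convex_scale (H x) (Hp x) (Hpp x)).
    - intros t; apply (hHp x t Hx).
    - intros t; apply (hHpp x t Hx).
    - intros t; apply (hconv x t Hx).
    - apply H0; auto. }
  assert (h1 : H (-1) 1 > 0).
  { destruct (mvt (H (-1)) (Hp (-1)) 0 1 (fun t => hHp (-1) t ltac:(lra)) ltac:(lra)) as [c0 [_ E]].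
    rewrite H0 in E by lra. specialize (Hpos c0). nra. }
  assert (h2 : H 1 (-1) > 0).
  { destruct (mvt (H 1) (Hp 1) (-1) 0 (fun t => hHp 1 t ltac:(lra)) ltac:(lra)) as [c0 [_ E]].
    rewrite H0 in E by lra. specialize (Hneg c0). nra. }
  destruct HH3 as [HK [_ _]].
  assert (Gu : exists Pu, forall x p, -1 <= x <= a -> p > Pu -> H x p > c).
  { destruct (cH (-1) 1 ltac:(lra) (H (-1) 1 / 2) ltac:(lra)) as [d [Hd Hc]].
    set (d' := Rmin d 1).
    assert (Hd' : 0 < d' /\ d' <= d) by (unfold d'; split; [apply Rmin_glb_lt; lra | apply Rmin_l]).
    destruct (HK (fun x => -1 + d'/2 <= x <= a) (compact_P3 _ _) ltac:(intros x Hx; lra) (Rabs c + 1)) as [P HP].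
    set (h := H (-1) 1).
    assert (Eh : h * (2 * Rabs c / h) = 2 * Rabs c) by (unfold h; field; lra).
    exists (Rmax (Rmax P 1) (2 * Rabs c / h + 1)). intros x p Hx Hpp'.
    pose proof (Rmax_l (Rmax P 1) (2 * Rabs c / h + 1)). pose proof (Rmax_r (Rmax P 1) (2 * Rabs c / h + 1)).
    pose proof (Rmax_l P 1). pose proof (Rmax_r P 1).
    pose proof (Rle_abs c). pose proof (Rabs_pos c).
    destruct (Rlt_or_le x (-1 + d'/2)) as [Hxl|Hxr].
    - assert (Hbl : ball2 (-1) 1 d x 1) by (unfold ball2; nra).
      pose proof (Hc x 1 ltac:(lra) Hbl) as Hc'. apply Rabs_def2 in Hc'.
      pose proof (Hcs x ltac:(lra) 1 p ltac:(lra)) as Hs. rewrite Rmult_1_r in Hs.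
      fold h in Hc'. nra.
    - assert (Habs : Rabs p = p) by (apply Rabs_right; lra).
      pose proof (HP x p ltac:(lra) ltac:(lra)) as HP'. rewrite Habs in HP'.
      assert (E : H x p = H x p / p * p) by (field; lra).
      nra. }
  assert (Gl : exists Pl, forall x p, b <= x <= 1 -> p < Pl -> H x p > c).
  { destruct (cH 1 (-1) ltac:(lra) (H 1 (-1) / 2) ltac:(lra)) as [d [Hd Hc]].
    set (d' := Rmin d 1).
    assert (Hd' : 0 < d' /\ d' <= d) by (unfold d'; split; [apply Rmin_glb_lt; lra | apply Rmin_l]).
    destruct (HK (fun x => b <= x <= 1 - d'/2) (compact_P3 _ _) ltac:(intros x Hx; lra) (Rabs c + 1)) as [P HP].
    set (h := H 1 (-1)).
    assert (Eh : h * (2 * Rabs c / h) = 2 * Rabs c) by (unfold h; field; lra).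
    exists (- Rmax (Rmax P 1) (2 * Rabs c / h + 1)). intros x p Hx Hpp'.
    pose proof (Rmax_l (Rmax P 1) (2 * Rabs c / h + 1)). pose proof (Rmax_r (Rmax P 1) (2 * Rabs c / h + 1)).
    pose proof (Rmax_l P 1). pose proof (Rmax_r P 1).
    pose proof (Rle_abs c). pose proof (Rabs_pos c).
    destruct (Rlt_or_le (1 - d'/2) x) as [Hxl|Hxr].
    - assert (Hbl : ball2 1 (-1) d x (-1)) by (unfold ball2; nra).
      pose proof (Hc x (-1) ltac:(lra) Hbl) as Hc'. apply Rabs_def2 in Hc'.
      pose proof (Hcs x ltac:(lra) (-1) (-p) ltac:(lra)) as Hs.
      replace (- p * -1) with p in Hs by ring.
      fold h in Hc'. nra.
    - assert (Habs : Rabs p = - p) by (apply Rabs_left; lra).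
      pose proof (HP x p ltac:(lra) ltac:(lra)) as HP'. rewrite Habs in HP'.
      assert (E : H x p = H x p / - p * - p) by (field; lra).
      nra. }
  destruct Gu as [Pu HPu]. destruct Gl as [Pl HPl].
  pose proof (Rmax_l Pu q). pose proof (Rmax_r Pu q). pose proof (Rmin_l Pl r). pose proof (Rmin_r Pl r).
  set (Pup := Rmax Pu q) in *. set (Pdn := Rmin Pl r) in *.
  apply (closed_sub_compact2 _ (fun x p => -1 <= x /\ x <= 1 /\ (Pdn <= p /\ p <= Pup))).
  - apply MC.rect_compact2.
  - intros x p [Hs [Hn Hc]]. unfold strip in Hs.
    split; [lra|]. split; [lra|]. split.
    + destruct (Rlt_or_le p Pdn) as [Hlt|]; [exfalso|lra].
      destruct (Rlt_or_le x b) as [Hxb|Hxb].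
      * apply Hn. right. split. { unfold Qminus, strip. repeat split; lra. }
        exists (Rmin (b - x) (r - p)). split. { apply Rmin_glb_lt; lra. }
        intros x' p' Hs' Hbl. unfold ball2 in Hbl.
        pose proof (Rmin_l (b - x) (r - p)). pose proof (Rmin_r (b - x) (r - p)).
        assert (0 < Rmin (b - x) (r - p)) by (apply Rmin_glb_lt; lra).
        destruct (ball_coord _ _ _ _ _ Hbl ltac:(assumption)).
        unfold Qminus. split; auto. split; lra.
      * pose proof (HPl x p ltac:(lra) ltac:(lra)). lra.
    + destruct (Rlt_or_le Pup p) as [Hlt|]; [exfalso|lra].
      destruct (Rlt_or_le a x) as [Hxa|Hxa].
      * apply Hn. left. split. { unfold Qplus, strip. repeat split; lra. }
        exists (Rmin (x - a) (p - q)). split. { apply Rmin_glb_lt; lra. }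
        intros x' p' Hs' Hbl. unfold ball2 in Hbl.
        pose proof (Rmin_l (x - a) (p - q)). pose proof (Rmin_r (x - a) (p - q)).
        assert (0 < Rmin (x - a) (p - q)) by (apply Rmin_glb_lt; lra).
        destruct (ball_coord _ _ _ _ _ Hbl ltac:(assumption)).
        unfold Qplus. split; auto. split; lra.
      * pose proof (HPu x p ltac:(lra) ltac:(lra)). lra.
  - intros x p HnK.
    destruct (Rlt_or_le x (-1)) as [Hx1|Hx1].
    { exists (-1 - x). split; [lra|]. intros x' p' Hbl [Hs' _]. unfold strip in Hs'.
      destruct (ball_coord _ _ _ _ _ Hbl ltac:(lra)). lra. }
    destruct (Rlt_or_le 1 x) as [Hx2|Hx2].
    { exists (x - 1). split; [lra|]. intros x' p' Hbl [Hs' _]. unfold strip in Hs'.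
      destruct (ball_coord _ _ _ _ _ Hbl ltac:(lra)). lra. }
    destruct (classic (rel_interior strip (Qplus a q) x p)) as [[HA [d [Hd Hd']]]|nR1].
    { exists (d/2). split; [lra|]. intros x' p' Hbl [Hs' [Hn' _]]. apply Hn'. left. split.
      - apply Hd'; auto. unfold ball2 in *. nra.
      - exists (d/2). split; [lra|]. intros x'' p'' Hs'' Hb''. apply Hd'; auto.
        apply (ball2_tri x p d x' p' x'' p''); auto. }
    destruct (classic (rel_interior strip (Qminus b r) x p)) as [[HA [d [Hd Hd']]]|nR2].
    { exists (d/2). split; [lra|]. intros x' p' Hbl [Hs' [Hn' _]]. apply Hn'. right. split.
      - apply Hd'; auto. unfold ball2 in *. nra.
      - exists (d/2). split; [lra|]. intros x'' p'' Hs'' Hb''. apply Hd'; auto.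
        apply (ball2_tri x p d x' p' x'' p''); auto. }
    destruct (Rle_or_lt (H x p) c) as [Hle|Hgt].
    { exfalso. apply HnK. split; [unfold strip; lra|]. split; auto. intros [?|?]; auto. }
    destruct (cH x p ltac:(lra) (H x p - c) ltac:(lra)) as [d [Hd Hc]].
    exists d. split; auto. intros x' p' Hbl [Hs' [_ Hc']].
    pose proof (Hc x' p' Hs' Hbl) as Hc2. apply Rabs_def2 in Hc2. lra.
Qed.

Theorem mainTheorem9 (H Hp Hpp : R -> R -> R)
  (H0 : forall x, -1 <= x <= 1 -> H x 0 = 0)
  (HH1 : H1_ext H)
  (hHp : forall x p, -1 <= x <= 1 -> derivable_pt_lim (fun q => H x q) p (Hp x p))
  (hHpp : forall x p, -1 <= x <= 1 -> derivable_pt_lim (fun q => Hp x q) p (Hpp x p))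
  (hconv : forall x p, -1 <= x <= 1 -> Hpp x p > 0)
  (HH4 : H4 H) :
  (exists vm vp : R,
      0 <= vm /\ vp <= 0 /\
      lim_minf (fun p => Hp (-1) p) vm /\
      lim_pinf (fun p => Hp 1 p) vp /\
      lim_minf (fun p => H (-1) p / p) vm /\
      lim_pinf (fun p => H 1 p / p) vp /\
      (forall p, Hp (-1) p > 0) /\ (forall p, Hp 1 p < 0)) /\
  (H3 H ->
   forall c a q b r : R, -1 < a < 1 -> 0 < q -> -1 < b < 1 -> r < 0 ->
   compact2 (fun x p =>
     strip x p /\
     ~ (rel_interior strip (Qplus a q) x p \/ rel_interior strip (Qminus b r) x p) /\
     H x p <= c)).
Proof.
  split.
  - exact (part1 H Hp Hpp H0 HH1 hHp hHpp hconv HH4).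
  - exact (part2 H Hp Hpp H0 HH1 hHp hHpp hconv HH4).
Qed.
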